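(* Suppose $A,B\in M_N(\mathbb C)$ are simultaneously diagonalizable, with a common basis of eigenvectors $v_1,\dots,v_N$, $Av_i=\lambda_iv_i$, $Bv_i=\gamma_iv_i$, all $\lambda_i$ real and positive, and put $\mu_i=\gamma_i/\lambda_i$. If $|\mu_i|<1$ for every $i=1,\dots,N$, then for every $\theta\in(1/2,1]$ the $\theta$-method with $u=0$ is unconditionally stable, i.e. stable for every step size $h=\tau/m$, $m\in\mathbb N$.
   Context: Let $\tau>0$ and consider $y'(t)=-Ay(t)+By(t-\tau)$. For $u=0$, $\theta\in[0,1]$, $m\in\mathbb N$ and $h=\tau/m$, the $\theta$-method is the recursion, for $n\ge0$ and arbitrary starting values $y_{-m},\dots,y_0\in\mathbb C^N$, $$y_{n+1}=y_n+h(1-\theta)\big[-Ay_n+By_{n-m}\big]+h\theta\big[-Ay_{n+1}+By_{n-m+1}\big].$$ It is called stable (for that $h$) if $y_n\to0$ as $n\to\infty$ for every choice of starting values. *)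

(* Defs.v *)
From HB Require Import structures.
From mathcomp Require Import all_boot all_order all_algebra.
From mathcomp Require Import complex.
From mathcomp Require Import reals.
Set Implicit Arguments. Unset Strict Implicit. Unset Printing Implicit Defensive.
Import Order.TTheory GRing.Theory Num.Theory.
Local Open Scope ring_scope.
Local Open Scope complex_scope.

(* The theta-method for y' = -A y + B y(t - tau), u = 0, step h = tau/m,
   with the index shift z k = y_(k - m), so that z 0, ..., z m are the
   starting values y_(-m), ..., y_0 and, for n >= 0,
   y_(n+1) = z (n+m+1), y_n = z (n+m), y_(n-m) = z n, y_(n-m+1) = z (n+1). *)
Definition theta_method_seq (R : realType) (N : nat) (A B : 'M[R[i]]_N)
    (h theta : R) (m : nat) (z : nat -> 'cV[R[i]]_N) : Prop :=
  forall n : nat,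
    z (n + m).+1 =
      z (n + m)%N
      + (h * (1 - theta))%:C *: (- (A *m z (n + m)%N) + B *m z n)
      + (h * theta)%:C *: (- (A *m z (n + m).+1) + B *m z n.+1).

Definition seq_tends_to_zero (R : realType) (N : nat)
    (z : nat -> 'cV[R[i]]_N) : Prop :=
  forall eps : R, 0 < eps ->
    exists n0 : nat, forall n : nat, (n0 <= n)%N ->
      forall i : 'I_N, `|z n i ord0| < eps%:C.

Definition theta_method_stable (R : realType) (N : nat) (A B : 'M[R[i]]_N)
    (tau theta : R) (m : nat) : Prop :=
  forall z : nat -> 'cV[R[i]]_N,
    theta_method_seq A B (tau / m%:R) theta m z -> seq_tends_to_zero z.

(* Main.v *)
Require Import Defs.
From HB Require Import structures.
From mathcomp Require Import all_boot all_order all_algebra.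
From mathcomp Require Import complex.
From mathcomp Require Import boolp classical_sets reals.
From mathcomp Require Import ring lra.
Import Order.TTheory GRing.Theory Num.Theory.
Local Open Scope ring_scope.

From mathcomp Require Import matrix.
Local Open Scope complex_scope.
Lemma lyap_tend (R : realType) (V t : nat -> R) :
  (forall n, 0 <= V n) -> (forall n, 0 <= t n) -> (forall n, V n.+1 + t n <= V n) ->
  forall eps, 0 < eps -> exists n0, forall n, (n0 <= n)%N -> t n < eps.
Proof.
move=> V0 t0 dec eps eps0.
have mono : forall n k, V (n + k)%N <= V n.
  move=> n; elim=> [|k IH]; first by rewrite addn0.
  rewrite addnS; apply: le_trans IH; have := dec (n + k)%N; have := t0 (n+k)%N; lra.
set E := range V.
have hE : has_inf E.
  split; first by exists (V 0%N); exists 0%N.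
  by exists 0 => _ [k _ <-].
have [e [n0 _ <-] He] := inf_adherent eps0 hE.
exists n0 => n /subnK <-.
have h1 : inf E <= V (n - n0 + n0).+1 by apply: ge_inf; [case: hE| exists (n - n0 + n0).+1].
have h2 := mono n0 (n - n0)%N; rewrite addnC in h2.
have := dec (n - n0 + n0)%N; lra.
Qed.
Lemma cs_ineq (R : realFieldType) (c g1 g2 Yp Yq Zp Zq : R) :
  0 < c -> g1 ^+ 2 + g2 ^+ 2 <= c ^+ 2 ->
  2 * (Yp * (g1 * Zp - g2 * Zq) + Yq * (g1 * Zq + g2 * Zp))
    <= c * (Yp ^+ 2 + Yq ^+ 2 + (Zp ^+ 2 + Zq ^+ 2)).
Proof.
move=> c0 hg.
set w1 := g1 * Zp - g2 * Zq; set w2 := g1 * Zq + g2 * Zp.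
have hw : w1 ^+ 2 + w2 ^+ 2 = (g1 ^+ 2 + g2 ^+ 2) * (Zp ^+ 2 + Zq ^+ 2) by rewrite /w1 /w2; ring.
have hZ : 0 <= Zp ^+ 2 + Zq ^+ 2 by rewrite addr_ge0 // sqr_ge0.
have h1 : (g1 ^+ 2 + g2 ^+ 2) * (Zp ^+ 2 + Zq ^+ 2) <= c ^+ 2 * (Zp ^+ 2 + Zq ^+ 2)
  by rewrite ler_wpM2r.
have h2 : 0 <= (w1 - c * Yp) ^+ 2 + (w2 - c * Yq) ^+ 2 by rewrite addr_ge0 // sqr_ge0.
have h3 : c * (2 * (Yp * w1 + Yq * w2)) <= c * (c * (Yp ^+ 2 + Yq ^+ 2 + (Zp ^+ 2 + Zq ^+ 2))).
  have -> : c * (c * (Yp ^+ 2 + Yq ^+ 2 + (Zp ^+ 2 + Zq ^+ 2))) =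
     c ^+ 2 * (Yp ^+ 2 + Yq ^+ 2) + c ^+ 2 * (Zp ^+ 2 + Zq ^+ 2) by ring.
  have -> : c * (2 * (Yp * w1 + Yq * w2)) =
     (w1 ^+ 2 + w2 ^+ 2) + c ^+ 2 * (Yp ^+ 2 + Yq ^+ 2) - ((w1 - c * Yp) ^+ 2 + (w2 - c * Yq) ^+ 2) by ring.
  lra.
by rewrite -(ler_pM2l c0).
Qed.

Lemma step_ineq (R : realFieldType) (l g1 g2 h th c P0 P1 Q0 Q1 Pd0 Pd1 Qd0 Qd1 : R) :
  0 < c -> g1 ^+ 2 + g2 ^+ 2 <= c ^+ 2 -> 0 <= h ->
  P1 = P0 + h * (1 - th) * (- (l * P0) + (g1 * Pd0 - g2 * Qd0))
          + h * th * (- (l * P1) + (g1 * Pd1 - g2 * Qd1)) ->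
  Q1 = Q0 + h * (1 - th) * (- (l * Q0) + (g1 * Qd0 + g2 * Pd0))
          + h * th * (- (l * Q1) + (g1 * Qd1 + g2 * Pd1)) ->
  (P1 ^+ 2 + Q1 ^+ 2) - (P0 ^+ 2 + Q0 ^+ 2) <=
   - (2 * h * l) * ((th * P1 + (1 - th) * P0) ^+ 2 + (th * Q1 + (1 - th) * Q0) ^+ 2)
   + h * c * (((th * P1 + (1 - th) * P0) ^+ 2 + (th * Q1 + (1 - th) * Q0) ^+ 2)
              + ((th * Pd1 + (1 - th) * Pd0) ^+ 2 + (th * Qd1 + (1 - th) * Qd0) ^+ 2))
   + (1 - 2 * th) * ((P1 - P0) ^+ 2 + (Q1 - Q0) ^+ 2).
Proof.
move=> c0 hg h0 eP eQ.
set Yp := th * P1 + (1 - th) * P0; set Yq := th * Q1 + (1 - th) * Q0.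
set Zp := th * Pd1 + (1 - th) * Pd0; set Zq := th * Qd1 + (1 - th) * Qd0.
have eDp : P1 - P0 = h * (- (l * Yp) + (g1 * Zp - g2 * Zq)).
  by rewrite {1}eP /Yp /Zp /Zq; ring.
have eDq : Q1 - Q0 = h * (- (l * Yq) + (g1 * Zq + g2 * Zp)).
  by rewrite {1}eQ /Yq /Zp /Zq; ring.
have E1 : (P1 ^+ 2 + Q1 ^+ 2) - (P0 ^+ 2 + Q0 ^+ 2) =
   2 * (Yp * (P1 - P0) + Yq * (Q1 - Q0)) + (1 - 2 * th) * ((P1 - P0) ^+ 2 + (Q1 - Q0) ^+ 2)
  by rewrite /Yp /Yq; ring.
have E2 : Yp * (P1 - P0) + Yq * (Q1 - Q0) =
   h * (- l * (Yp ^+ 2 + Yq ^+ 2) + (Yp * (g1 * Zp - g2 * Zq) + Yq * (g1 * Zq + g2 * Zp)))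
  by rewrite eDp eDq; ring.
have E3 := @cs_ineq _ c g1 g2 Yp Yq Zp Zq c0 hg.
have E4 : h * (2 * (Yp * (g1 * Zp - g2 * Zq) + Yq * (g1 * Zq + g2 * Zp)))
   <= h * (c * (Yp ^+ 2 + Yq ^+ 2 + (Zp ^+ 2 + Zq ^+ 2))) by rewrite ler_wpM2l.
rewrite E1 E2.
have -> : 2 * (h * (- l * (Yp ^+ 2 + Yq ^+ 2) + (Yp * (g1 * Zp - g2 * Zq) + Yq * (g1 * Zq + g2 * Zp))))
   = - (2 * h * l) * (Yp ^+ 2 + Yq ^+ 2) + h * (2 * (Yp * (g1 * Zp - g2 * Zq) + Yq * (g1 * Zq + g2 * Zp))) by ring.
have -> : h * c * (Yp ^+ 2 + Yq ^+ 2 + (Zp ^+ 2 + Zq ^+ 2)) = h * (c * (Yp ^+ 2 + Yq ^+ 2 + (Zp ^+ 2 + Zq ^+ 2))) by ring.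
lra.
Qed.
Lemma sqr_bound (R : realFieldType) (th P0 P1 Q0 Q1 : R) : 0 <= th <= 1 ->
  P0 ^+ 2 + Q0 ^+ 2 <= 2 * ((th * P1 + (1 - th) * P0) ^+ 2 + (th * Q1 + (1 - th) * Q0) ^+ 2)
    + 2 * ((P1 - P0) ^+ 2 + (Q1 - Q0) ^+ 2).
Proof.
move=> /andP[t0 t1].
set Yp := th * P1 + (1 - th) * P0; set Yq := th * Q1 + (1 - th) * Q0.
set Dp := P1 - P0; set Dq := Q1 - Q0.
have eP : P0 = Yp - th * Dp by rewrite /Yp /Dp; ring.
have eQ : Q0 = Yq - th * Dq by rewrite /Yq /Dq; ring.
rewrite eP eQ.
have h1 : 0 <= (Yp + th * Dp) ^+ 2 + (Yq + th * Dq) ^+ 2 by rewrite addr_ge0 // sqr_ge0.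
have h2 : th ^+ 2 <= 1 by rewrite expr2; nra.
have h3 : th ^+ 2 * (Dp ^+ 2 + Dq ^+ 2) <= 1 * (Dp ^+ 2 + Dq ^+ 2)
  by rewrite ler_wpM2r // addr_ge0 // sqr_ge0.
have -> : (Yp - th * Dp) ^+ 2 + (Yq - th * Dq) ^+ 2 =
   2 * (Yp ^+ 2 + Yq ^+ 2) + 2 * (th ^+ 2 * (Dp ^+ 2 + Dq ^+ 2))
   - ((Yp + th * Dp) ^+ 2 + (Yq + th * Dq) ^+ 2) by ring.
lra.
Qed.

Lemma core (R : realType) (l g1 g2 h th : R) (m : nat) (p q : nat -> R) :
  0 < l -> g1 ^+ 2 + g2 ^+ 2 < l ^+ 2 -> 0 < h -> 1 / 2 < th -> th <= 1 ->
  (forall n, p (n + m).+1 = p (n + m)%N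
      + h * (1 - th) * (- (l * p (n + m)%N) + (g1 * p n - g2 * q n))
      + h * th * (- (l * p (n + m).+1) + (g1 * p n.+1 - g2 * q n.+1))) ->
  (forall n, q (n + m).+1 = q (n + m)%N
      + h * (1 - th) * (- (l * q (n + m)%N) + (g1 * q n + g2 * p n))
      + h * th * (- (l * q (n + m).+1) + (g1 * q n.+1 + g2 * p n.+1))) ->
  forall eps, 0 < eps -> exists n0, forall n, (n0 <= n)%N -> p n ^+ 2 + q n ^+ 2 < eps.
Proof.
move=> l0 hG h0 th1 th2 eP eQ eps eps0.
set G := g1 ^+ 2 + g2 ^+ 2.
have {}hG : G < l ^+ 2 by [].
have G0 : 0 <= G by rewrite addr_ge0 // sqr_ge0.
set c := (l ^+ 2 + G) / (2 * l).
have ec : 2 * l * c = l ^+ 2 + G by rewrite /c mulrC divfK // mulf_neq0 // gt_eqF.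
have c0 : 0 < c by rewrite /c divr_gt0 // ?mulr_gt0 //; rewrite expr2; nra.
have cl : c < l.
  have : 2 * l * c < 2 * l * l by rewrite ec -mulrA -expr2; lra.
  by rewrite ltr_pM2l // mulr_gt0.
have cG : G <= c ^+ 2.
  have : 0 <= (l ^+ 2 - G) ^+ 2 by rewrite sqr_ge0.
  have e2 : 4 * l ^+ 2 * (c ^+ 2 - G) = (l ^+ 2 - G) ^+ 2.
    have -> : 4 * l ^+ 2 * (c ^+ 2 - G) = (2 * l * c) ^+ 2 - 4 * l ^+ 2 * G by ring.
    rewrite ec; ring.
  rewrite -e2 => H; rewrite -subr_ge0.
  have l2 : 0 < 4 * l ^+ 2 by rewrite mulr_gt0 // exprn_gt0.
  by rewrite -(pmulr_rge0 _ l2).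
set Y2 := fun k => (th * p k.+1 + (1 - th) * p k) ^+ 2 + (th * q k.+1 + (1 - th) * q k) ^+ 2.
set E := fun k => p k ^+ 2 + q k ^+ 2.
set D2 := fun k => (p k.+1 - p k) ^+ 2 + (q k.+1 - q k) ^+ 2.
have Y20 : forall k, 0 <= Y2 k by move=> k; rewrite /Y2 addr_ge0 // sqr_ge0.
have E0 : forall k, 0 <= E k by move=> k; rewrite /E addr_ge0 // sqr_ge0.
have D20 : forall k, 0 <= D2 k by move=> k; rewrite /D2 addr_ge0 // sqr_ge0.
set a := 2 * h * (l - c).
set b := 2 * th - 1.
have a0 : 0 < a by rewrite /a mulr_gt0 ?mulr_gt0 // subr_gt0.
have b0 : 0 < b by rewrite /b; lra.
set e := Num.min a b / 2.
have e0 : 0 < e by rewrite /e divr_gt0 // lt_min a0 b0.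
have ea : 2 * e <= a by rewrite /e mulrC divfK ?ge_min ?lexx // pnatr_eq0.
have eb : 2 * e <= b by rewrite /e mulrC divfK ?ge_min ?lexx ?orbT // pnatr_eq0.
set V := fun n => E (n + m)%N + h * c * \sum_(k < m) Y2 (n + k)%N.
have V0 : forall n, 0 <= V n.
  move=> n; rewrite /V addr_ge0 // mulr_ge0 //; first by rewrite mulr_ge0 // ltW.
  by rewrite sumr_ge0.
have dec : forall n, V n.+1 + e * E (n + m)%N <= V n.
  move=> n.
  have st := @step_ineq R l g1 g2 h th c (p (n + m)%N) (p (n + m).+1) (q (n + m)%N) (q (n + m).+1)
     (p n) (p n.+1) (q n) (q n.+1) c0 cG (ltW h0) (eP n) (eQ n).
  have sb := @sqr_bound R th (p (n + m)%N) (p (n + m).+1) (q (n + m)%N) (q (n + m).+1).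
  have sb' : E (n + m)%N <= 2 * Y2 (n + m)%N + 2 * D2 (n + m)%N.
    by apply: sb; apply/andP; split => //; lra.
  have hs : \sum_(k < m) Y2 (n.+1 + k)%N + Y2 n = \sum_(k < m) Y2 (n + k)%N + Y2 (n + m)%N.
    have hs1 : \sum_(k < m.+1) Y2 (n + k)%N = \sum_(k < m) Y2 (n + k)%N + Y2 (n + m)%N
      by rewrite big_ord_recr.
    have hs2 : \sum_(k < m.+1) Y2 (n + k)%N = Y2 (n + 0)%N + \sum_(k < m) Y2 (n + k.+1)%N
      by rewrite big_ord_recl.
    rewrite -hs1 hs2 addn0 addrC; congr (_ + _).
    by apply: eq_bigr => k _; rewrite addSn addnS.
  have hV : V n.+1 = E (n + m).+1 + h * c * (\sum_(k < m) Y2 (n + k)%N + Y2 (n + m)%N - Y2 n).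
    by rewrite /V -hs addSn; congr (_ + _); ring.
  have h1 : e * E (n + m)%N <= e * (2 * Y2 (n + m)%N + 2 * D2 (n + m)%N) by rewrite ler_wpM2l // ltW.
  have h2 : (2 * e) * Y2 (n + m)%N <= a * Y2 (n + m)%N by rewrite ler_wpM2r.
  have h3 : (2 * e) * D2 (n + m)%N <= b * D2 (n + m)%N by rewrite ler_wpM2r.
  rewrite hV /V.
  move: st; rewrite -/(Y2 (n + m)%N) -/(Y2 n) -/(D2 (n + m)%N) -/(E (n + m)%N) -/(E (n + m).+1).
  rewrite /a /b in h2 h3 => st.
  lra.
have t0 : forall n, 0 <= e * E (n + m)%N by move=> n; rewrite mulr_ge0 // ltW.
have [n0 Hn0] := @lyap_tend R V (fun n => e * E (n + m)%N) V0 t0 dec _ (mulr_gt0 e0 eps0).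
exists (n0 + m)%N => n hn.
have hm : (m <= n)%N by apply: leq_trans hn; rewrite leq_addl.
have hn1 : (n0 <= n - m)%N by rewrite leq_subRL // addnC.
have H := Hn0 (n - m)%N hn1.
rewrite /= subnK // in H.
move: H; rewrite ltr_pM2l //.
Qed.

Lemma ReM (R : realType) (a b : R[i]) : complex.Re (a * b) = complex.Re a * complex.Re b - complex.Im a * complex.Im b.
Proof. by case: a => a1 a2; case: b => b1 b2. Qed.
Lemma ImM (R : realType) (a b : R[i]) : complex.Im (a * b) = complex.Re a * complex.Im b + complex.Im a * complex.Re b.
Proof. by case: a => a1 a2; case: b => b1 b2. Qed.
Lemma ReD (R : realType) (a b : R[i]) : complex.Re (a + b) = complex.Re a + complex.Re b.
Proof. by case: a => a1 a2; case: b => b1 b2. Qed.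
Lemma ImD (R : realType) (a b : R[i]) : complex.Im (a + b) = complex.Im a + complex.Im b.
Proof. by case: a => a1 a2; case: b => b1 b2. Qed.
Lemma ReN (R : realType) (a : R[i]) : complex.Re (- a) = - complex.Re a.
Proof. by case: a. Qed.
Lemma ImN (R : realType) (a : R[i]) : complex.Im (- a) = - complex.Im a.
Proof. by case: a. Qed.
Lemma ReC (R : realType) (a : R) : complex.Re (a%:C) = a. Proof. by []. Qed.
Lemma ImC (R : realType) (a : R) : complex.Im (a%:C) = 0. Proof. by []. Qed.

Lemma entD (R : realType) (N : nat) (P Q : 'cV[R[i]]_N) j : (P + Q) j ord0 = P j ord0 + Q j ord0.
Proof. by rewrite mxE. Qed.
Lemma entN (R : realType) (N : nat) (P : 'cV[R[i]]_N) j : (- P) j ord0 = - P j ord0.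
Proof. by rewrite mxE. Qed.
Lemma entZ (R : realType) (N : nat) (a : R[i]) (P : 'cV[R[i]]_N) j : (a *: P) j ord0 = a * P j ord0.
Proof. by rewrite mxE. Qed.
Lemma comb (R : realType) (N : nat) (W M1 M2 : 'M[R[i]]_N) (z0 z1 zd0 zd1 : 'cV[R[i]]_N) (c1 c2 : R[i]) j :
  z1 = z0 + c1 *: (-(M1 *m z0) + M2 *m zd0) + c2 *: (-(M1 *m z1) + M2 *m zd1) ->
  (W *m z1) j ord0 = (W *m z0) j ord0 + c1 * (-((W *m (M1 *m z0)) j ord0) + (W *m (M2 *m zd0)) j ord0)
     + c2 * (-((W *m (M1 *m z1)) j ord0) + (W *m (M2 *m zd1)) j ord0).
Proof.
move=> e.
have -> : W *m z1 = W *m z0 + c1 *: (-(W *m (M1 *m z0)) + W *m (M2 *m zd0)) + c2 *: (-(W *m (M1 *m z1)) + W *m (M2 *m zd1)).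
  by rewrite {1}e !mulmxDr -!scalemxAr !mulmxDr !mulmxN.
set a := W *m z0; set b1 := W *m (M1 *m z0); set b2 := W *m (M2 *m zd0).
set b3 := W *m (M1 *m z1); set b4 := W *m (M2 *m zd1).
by rewrite !mxE.
Qed.

Lemma scal_re (R : realType) (l c1 c2 : R) (g y0 y1 yd0 yd1 : R[i]) :
  y1 = y0 + c1%:C * (-(l%:C * y0) + g * yd0) + c2%:C * (-(l%:C * y1) + g * yd1) ->
  complex.Re y1 = complex.Re y0
    + c1 * (- (l * complex.Re y0) + (complex.Re g * complex.Re yd0 - complex.Im g * complex.Im yd0))
    + c2 * (- (l * complex.Re y1) + (complex.Re g * complex.Re yd1 - complex.Im g * complex.Im yd1)).
Proof.
case: g => g1 g2; case: y0 => a0 b0; case: y1 => a1 b1; case: yd0 => p0 q0; case: yd1 => p1 q1.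
move=> /(congr1 (@complex.Re R)) /= H. rewrite {1}H. ring.
Qed.

Lemma scal_im (R : realType) (l c1 c2 : R) (g y0 y1 yd0 yd1 : R[i]) :
  y1 = y0 + c1%:C * (-(l%:C * y0) + g * yd0) + c2%:C * (-(l%:C * y1) + g * yd1) ->
  complex.Im y1 = complex.Im y0
    + c1 * (- (l * complex.Im y0) + (complex.Re g * complex.Im yd0 + complex.Im g * complex.Re yd0))
    + c2 * (- (l * complex.Im y1) + (complex.Re g * complex.Im yd1 + complex.Im g * complex.Re yd1)).
Proof.
case: g => g1 g2; case: y0 => a0 b0; case: y1 => a1 b1; case: yd0 => p0 q0; case: yd1 => p1 q1.
move=> /(congr1 (@complex.Im R)) /= H. rewrite {1}H. ring.
Qed.

Lemma realCM (R : realType) (a b : R) : (a * b)%:C = a%:C * b%:C.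
Proof. by apply/eqP; rewrite eq_complex /= !mulr0 !mul0r subr0 addr0 !eqxx. Qed.

Set Implicit Arguments.
Lemma diag_act (R : realType) (N : nat) (V M : 'M[R[i]]_N) (lamf : 'I_N -> R[i]) :
  V \in unitmx -> (forall j, M *m col j V = lamf j *: col j V) ->
  forall (y : 'cV[R[i]]_N) j, (invmx V *m (M *m y)) j ord0 = lamf j * (invmx V *m y) j ord0.
Proof.
move=> Vu hM y j.
have MV : M *m V = V *m diag_mx (\row_j lamf j).
  apply/matrixP => i k.
  have e1 : (M *m V) i k = (M *m col k V) i ord0.
    by rewrite !mxE; apply: eq_bigr => l _; rewrite !mxE.
  by rewrite e1 hM mul_mx_diag !mxE mulrC.
have WM : invmx V *m M = diag_mx (\row_j lamf j) *m invmx V.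
  by rewrite -[invmx V *m M]mulmx1 -(mulmxV Vu) mulmxA -(mulmxA (invmx V) M V) MV
    mulmxA (mulVmx Vu) mul1mx.
by rewrite mulmxA WM -mulmxA mul_diag_mx mxE mxE.
Qed.

Unset Implicit Arguments.
Theorem mainTheorem13 (R : realType) (N : nat) (A B : 'M[R[i]]_N)
    (tau : R) (V : 'M[R[i]]_N) (lam gam : 'I_N -> R[i]) :
  0 < tau ->
  V \in unitmx ->
  (forall j : 'I_N, A *m col j V = lam j *: col j V) ->
  (forall j : 'I_N, B *m col j V = gam j *: col j V) ->
  (forall j : 'I_N, lam j \is Num.real /\ 0 < lam j) ->
  (forall j : 'I_N, `|gam j / lam j| < 1) ->
  forall theta : R, 1 / 2 < theta <= 1 ->
  forall m : nat, (0 < m)%N ->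
    theta_method_stable A B tau theta m.
Proof.
move=> tau0 Vu hA hB hlam hgam theta /andP[th1 th2] m m0 z.
rewrite /theta_method_seq; set h := tau / m%:R => hz.
have h0 : 0 < h by rewrite /h divr_gt0 // ltr0n.
set x := fun j k => (invmx V *m z k) j ord0.
have hx : forall j n, x j (n + m).+1 = x j (n + m)%N
   + (h * (1 - theta))%:C * (- (lam j * x j (n + m)%N) + gam j * x j n)
   + (h * theta)%:C * (- (lam j * x j (n + m).+1) + gam j * x j n.+1).
  move=> j n.
  have := @comb _ _ (invmx V) A B _ _ _ _ _ _ j (hz n).
  rewrite (diag_act lam Vu hA (z (n + m)%N) j) (diag_act lam Vu hA (z (n + m).+1) j).
  by rewrite (diag_act gam Vu hB (z n) j) (diag_act gam Vu hB (z n.+1) j).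
have conv : forall j, forall d, 0 < d -> exists n0, forall n, (n0 <= n)%N ->
    complex.Re (x j n) ^+ 2 + complex.Im (x j n) ^+ 2 < d.
  move=> j d d0.
  have [lr lp] := hlam j.
  have el : lam j = (complex.Re (lam j))%:C by rewrite RRe_real.
  have iml : complex.Im (lam j) = 0 by rewrite el.
  have l0 : 0 < complex.Re (lam j) by rewrite -ltcR -el.
  have hG : complex.Re (gam j) ^+ 2 + complex.Im (gam j) ^+ 2 < complex.Re (lam j) ^+ 2.
    have g1 : `|gam j| < lam j.
      have H := hgam j.
      rewrite normrM normfV ltr_pdivrMr ?normr_gt0 ?gt_eqF // mul1r in H.
      by rewrite -(gtr0_norm lp).
    have g2 : `|gam j| ^+ 2 < lam j ^+ 2.
      by rewrite ltr_pXn2r //; rewrite nnegrE ?normr_ge0 // ltW.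
    by rewrite -ltcR add_Re2_Im2 rmorphXn /= -el.
  set p := fun k => complex.Re (x j k).
  set q := fun k => complex.Im (x j k).
  have eP : forall n, p (n + m).+1 = p (n + m)%N
      + h * (1 - theta) * (- (complex.Re (lam j) * p (n + m)%N) + (complex.Re (gam j) * p n - complex.Im (gam j) * q n))
      + h * theta * (- (complex.Re (lam j) * p (n + m).+1) + (complex.Re (gam j) * p n.+1 - complex.Im (gam j) * q n.+1)).
    by move=> n; have := hx j n; rewrite el; move/scal_re.
  have eQ : forall n, q (n + m).+1 = q (n + m)%N
      + h * (1 - theta) * (- (complex.Re (lam j) * q (n + m)%N) + (complex.Re (gam j) * q n + complex.Im (gam j) * p n))
      + h * theta * (- (complex.Re (lam j) * q (n + m).+1) + (complex.Re (gam j) * q n.+1 + complex.Im (gam j) * p n.+1)).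
    by move=> n; have := hx j n; rewrite el; move/scal_im.
  exact: (@core R (complex.Re (lam j)) (complex.Re (gam j)) (complex.Im (gam j)) h theta m
     p q l0 hG h0 th1 th2 eP eQ d d0).
pose S := \sum_(i0 < N) \sum_(j < N) `|V i0 j|.
have S0 : 0 <= S by apply: sumr_ge0 => i0 _; apply: sumr_ge0 => j _; exact: normr_ge0.
have eS : S = (complex.Re S)%:C by rewrite RRe_real // ger0_real.
have r0 : 0 <= complex.Re S by rewrite -ler0c -eS.
set r := complex.Re S.
move=> eps eps0.
pose d := eps / (r + 1).
have r1 : 0 < r + 1 by lra.
have d0 : 0 < d by rewrite /d divr_gt0.
have hall : forall j : 'I_N, exists n0, forall n, (n0 <= n)%N ->
    complex.Re (x j n) ^+ 2 + complex.Im (x j n) ^+ 2 < d ^+ 2.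
  by move=> j; apply: conv; rewrite exprn_gt0.
have [f hf] := fin_all_exists hall.
exists (\max_(j < N) f j) => n hn i.
have hxj : forall j, `|x j n| <= d%:C.
  move=> j; have H := hf j n (leq_trans (leq_bigmax j) hn).
  have H2 : `|x j n| ^+ 2 < d%:C ^+ 2 by rewrite -add_Re2_Im2 -rmorphXn ltcR.
  have hn1 : `|x j n| \in Num.nneg by rewrite nnegrE normr_ge0.
  have hn2 : d%:C \in Num.nneg by rewrite nnegrE ler0c ltW.
  by apply: ltW; rewrite -(ltr_pXn2r (n:=2) _ hn1 hn2).
have ez : z n = V *m (invmx V *m z n) by rewrite mulmxA mulmxV // mul1mx.
rewrite ez mxE.
apply: (le_lt_trans (ler_norm_sum _ _ _)).
apply: (@le_lt_trans _ _ (\sum_(j < N) `|V i j| * d%:C)).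
  by apply: ler_sum => j _; rewrite normrM ler_wpM2l // hxj.
rewrite -mulr_suml.
have hrow : \sum_(j < N) `|V i j| <= S.
  rewrite /S [X in _ <= X](bigD1 i) //= lerDl; apply: sumr_ge0 => i0 _; apply: sumr_ge0 => j _.
  exact: normr_ge0.
apply: (@le_lt_trans _ _ (S * d%:C)).
  by rewrite ler_wpM2r // ler0c ltW.
rewrite eS -realCM ltcR /d mulrA ltr_pdivrMr //.
lra.
Qed.
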